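(* Let $R$ be a ring and $n\ge 1$ an integer, and let $R_n$ be the subring of $n\times n$ upper triangular matrices over $R$ whose diagonal entries are all equal, i.e. matrices $(a_{ij})$ with $a_{ij}=0$ for $i>j$, $a_{11}=a_{22}=\dots=a_{nn}$, and arbitrary $a_{ij}\in R$ for $i<j$. Then $R$ is NJ-symmetric if and only if $R_n$ is NJ-symmetric.
   Context: Rings are associative with identity. $N(S)$ is the set of nilpotent elements, $J(S)$ the Jacobson radical of a ring $S$. $S$ is NJ-symmetric if for all $a,b,c\in S$, $abc\in N(S)$ implies $bac\in J(S)$. *)

(* Defs.v *)
From HB Require Import structures.
From mathcomp Require Import all_boot all_order all_algebra.
Set Implicit Arguments. Unset Strict Implicit. Unset Printing Implicit Defensive.
Import GRing.Theory.
Local Open Scope ring_scope.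

Definition nilpotent_elt (S : nzRingType) (x : S) : Prop := exists m : nat, x ^+ m = 0.

Definition left_ideal (S : nzRingType) (I : S -> Prop) : Prop :=
  [/\ I 0, (forall x y, I x -> I y -> I (x + y)), (forall x, I x -> I (- x))
    & (forall r x, I x -> I (r * x))].

Definition maximal_left_ideal (S : nzRingType) (I : S -> Prop) : Prop :=
  [/\ left_ideal I, ~ I 1 &
      forall K : S -> Prop, left_ideal K -> (forall x, I x -> K x) ->
        (exists x, K x /\ ~ I x) -> K 1].

Definition jacobson (S : nzRingType) (x : S) : Prop :=
  forall I : S -> Prop, maximal_left_ideal I -> I x.

Definition NJ_symmetric (S : nzRingType) : Prop :=
  forall a b c : S, nilpotent_elt (a * b * c) -> jacobson (b * a * c).

(* R_n (for n = m.+1 >= 1): upper triangular matrices with constant diagonal *)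
Section Rn.
Variables (R : nzRingType) (m : nat).

Definition Rn_pred : pred 'M[R]_m.+1 := fun A =>
  [forall i : 'I_m.+1, forall j : 'I_m.+1, (j < i)%N ==> (A i j == 0)] &&
  [forall i : 'I_m.+1, A i i == A ord0 ord0].

Lemma Rn_predP (A : 'M[R]_m.+1) :
  reflect (((forall i j : 'I_m.+1, (j < i)%N -> A i j = 0) /\
           (forall i : 'I_m.+1, A i i = A ord0 ord0))%type) (A \in Rn_pred).
Proof.
apply: (iffP andP) => [[/forallP H1 /forallP H2]|[H1 H2]]; split.
- by move=> i j ji; have /forallP/(_ j)/implyP/(_ ji)/eqP := H1 i.
- by move=> i; apply/eqP.
- by apply/forallP=> i; apply/forallP=> j; apply/implyP=> ji; apply/eqP/H1.
- by apply/forallP=> i; apply/eqP.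
Qed.

Lemma Rn_mul_low (A B : 'M[R]_m.+1) : A \in Rn_pred -> B \in Rn_pred ->
  forall i j : 'I_m.+1, (j < i)%N -> (A * B) i j = 0.
Proof.
move=> /Rn_predP[A1 _] /Rn_predP[B1 _] i j ji.
rewrite [A * B]/GRing.mul /= mxE big1 // => k _.
case: (ltnP k i) => ki; first by rewrite A1 // mul0r.
by rewrite B1 ?mulr0 //; apply: leq_trans ji ki.
Qed.

Lemma Rn_mul_diag (A B : 'M[R]_m.+1) : A \in Rn_pred -> B \in Rn_pred ->
  forall i : 'I_m.+1, (A * B) i i = A i i * B i i.
Proof.
move=> /Rn_predP[A1 _] /Rn_predP[B1 _] i.
rewrite [A * B]/GRing.mul /= mxE (bigD1 i) //= big1 ?addr0 // => k ki.
case: (ltnP k i) => lki; first by rewrite A1 // mul0r.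
rewrite B1 ?mulr0 //; rewrite ltn_neqAle lki andbT.
by apply/negP => /eqP/val_inj E; move: ki; rewrite E eqxx.
Qed.

Lemma Rn_subring_closed : subring_closed Rn_pred.
Proof.
split.
- apply/Rn_predP; split => [i j ji|i]; rewrite !mxE.
    have /negbTE-> : i != j by apply/negP=> /eqP E; move: ji; rewrite E ltnn.
    by [].
  by rewrite !eqxx.
- move=> A B /Rn_predP[A1 A2] /Rn_predP[B1 B2]; apply/Rn_predP; split.
    by move=> i j ji; rewrite !mxE A1 // B1 // subr0.
  by move=> i; rewrite !mxE A2 B2.
- move=> A B HA HB; apply/Rn_predP; split; first exact: Rn_mul_low.
  by move=> i; rewrite !Rn_mul_diag //; move/Rn_predP: HA => [_ ->];
     move/Rn_predP: HB => [_ ->].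
Qed.

HB.instance Definition _ := GRing.isSubringClosed.Build _ Rn_pred Rn_subring_closed.

Record Rn_type := RnMk { Rn_val :> 'M[R]_m.+1; _ : Rn_val \in Rn_pred }.
HB.instance Definition _ := [isSub for Rn_val].
HB.instance Definition _ := [Choice of Rn_type by <:].
HB.instance Definition _ := [SubChoice_isSubNzRing of Rn_type by <:].
End Rn.

(* Main.v *)
Require Import Defs.
From mathcomp Require Import all_boot all_algebra.
From Stdlib Require Import Classical.
Import GRing.Theory.
Local Open Scope ring_scope.

Section Aux.
Variables (R : nzRingType) (n : nat).
Local Notation T := (Rn_type R n).

Definition phi (A : T) : R := (val A) ord0 ord0.

Lemma phiD (A B : T) : phi (A + B) = phi A + phi B.
Proof. by rewrite /phi raddfD mxE. Qed.
Lemma phiN (A : T) : phi (- A) = - phi A.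
Proof. by rewrite /phi raddfN mxE. Qed.
Lemma phi0 : phi 0 = 0.
Proof. by rewrite /phi raddf0 mxE. Qed.
Lemma phi1 : phi 1 = 1.
Proof. by rewrite /phi rmorph1 mxE eqxx. Qed.
Lemma phiM (A B : T) : phi (A * B) = phi A * phi B.
Proof. by rewrite /phi rmorphM Rn_mul_diag //; apply: valP. Qed.
Lemma phiX (A : T) k : phi (A ^+ k) = phi A ^+ k.
Proof. elim: k => [|k IH]; first by rewrite !expr0 phi1. by rewrite !exprS phiM IH. Qed.

Lemma sc_in (r : R) : (r%:M : 'M[R]_n.+1) \in @Rn_pred R n.
Proof.
apply/Rn_predP; split => [i j ji|i]; rewrite !mxE.
  have /negbTE-> : i != j by apply/negP=> /eqP E; move: ji; rewrite E ltnn.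
  by [].
by rewrite !eqxx.
Qed.

Definition sc (r : R) : T := RnMk (sc_in r).

Lemma val_sc r : val (sc r) = r%:M. Proof. by []. Qed.
Lemma phi_sc r : phi (sc r) = r.
Proof. by rewrite /phi val_sc mxE eqxx. Qed.
Lemma scD r s : sc (r + s) = sc r + sc s.
Proof. by apply: val_inj; rewrite raddfD !val_sc raddfD. Qed.
Lemma scN r : sc (- r) = - sc r.
Proof. by apply: val_inj; rewrite raddfN !val_sc raddfN. Qed.
Lemma sc0 : sc 0 = 0.
Proof. by apply: val_inj; rewrite raddf0 !val_sc raddf0. Qed.
Lemma sc1 : sc 1 = 1.
Proof. by apply: val_inj; rewrite rmorph1 !val_sc rmorph1. Qed.
Lemma scM r s : sc (r * s) = sc r * sc s.
Proof. by apply: val_inj; rewrite rmorphM !val_sc rmorphM. Qed.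
Lemma scX r k : sc (r ^+ k) = sc r ^+ k.
Proof. elim: k => [|k IH]; first by rewrite !expr0 sc1. by rewrite !exprS scM IH. Qed.

Lemma strict_upper_pow (Y : 'M[R]_n.+1) :
  (forall i j : 'I_n.+1, (j <= i)%N -> Y i j = 0) ->
  forall k (i j : 'I_n.+1), (j < i + k)%N -> (Y ^+ k) i j = 0.
Proof.
move=> HY; elim=> [|k IH] i j.
  rewrite addn0 expr0 => ji; rewrite mxE.
  have /negbTE-> : i != j by apply/negP=> /eqP E; move: ji; rewrite E ltnn.
  by [].
move=> jik; rewrite exprSr -mulmxE mxE big1 // => l _.
case: (ltnP l (i + k)) => lik; first by rewrite IH // mul0r.
rewrite HY ?mulr0 //; rewrite addnS ltnS in jik; exact: leq_trans jik lik.
Qed.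

Lemma strict_upper_nil (Y : 'M[R]_n.+1) :
  (forall i j : 'I_n.+1, (j <= i)%N -> Y i j = 0) -> Y ^+ n.+1 = 0.
Proof.
move=> HY; apply/matrixP => i j; rewrite mxE; apply: strict_upper_pow => //.
by apply: leq_trans (ltn_ord j) _; rewrite leq_addl.
Qed.

Lemma geom_left (S : nzRingType) (x : S) k :
  (\sum_(i < k) x ^+ i) * (1 - x) = 1 - x ^+ k.
Proof.
elim: k => [|k IH]; first by rewrite big_ord0 mul0r expr0 subrr.
rewrite big_ord_recr /= mulrDl IH mulrBr mulr1 -exprSr.
by rewrite addrA subrK.
Qed.

Lemma ker_nil (Y : T) : phi Y = 0 -> Y ^+ n.+1 = 0.
Proof.
move=> H0; apply: val_inj; rewrite rmorphXn raddf0.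
apply: strict_upper_nil => i j; rewrite leq_eqVlt => /orP[/eqP E|ji].
  have -> : j = i by apply: val_inj.
  by move/Rn_predP: (valP Y) => [_ HD]; rewrite HD; exact: H0.
by move/Rn_predP: (valP Y) => [HL _]; apply: HL.
Qed.

Lemma max_ker (M : T -> Prop) : maximal_left_ideal M ->
  forall A : T, phi A = 0 -> M A.
Proof.
move=> [[M0 MD MN MM] M1 Mmax] A HA.
apply: NNPP => nMA; apply: M1.
pose K := fun x : T => exists m y, M m /\ x = m + y * A.
have : K 1.
  apply: Mmax.
  - split.
    + by exists 0, 0; rewrite mul0r addr0.
    + move=> x y [m1 [y1 [H1 ->]]] [m2 [y2 [H2 ->]]].
      exists (m1 + m2), (y1 + y2); split; first exact: MD.
      by rewrite mulrDl addrACA.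
    + move=> x [m1 [y1 [H1 ->]]]; exists (- m1), (- y1); split; first exact: MN.
      by rewrite opprD mulNr.
    + move=> r x [m1 [y1 [H1 ->]]]; exists (r * m1), (r * y1); split; first exact: MM.
      by rewrite mulrDr mulrA.
  - by move=> x Mx; exists x, 0; rewrite mul0r addr0.
  - by exists A; split => //; exists 0, 1; rewrite mul1r add0r.
move=> [m [y [Mm E]]].
have Em : m = 1 - y * A by rewrite E addrK.
have Y0 : phi (y * A) = 0 by rewrite phiM HA mulr0.
have : (\sum_(i < n.+1) (y * A) ^+ i) * m = 1.
  by rewrite Em geom_left ker_nil // subr0.
by move <-; apply: MM.
Qed.

Lemma max_sc (M : T -> Prop) : maximal_left_ideal M ->
  forall A : T, M A <-> M (sc (phi A)).
Proof.
move=> HM A; have [[M0 MD MN MM] _ _] := HM.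
have HK : M (A - sc (phi A)) by apply: max_ker => //; rewrite phiD phiN phi_sc subrr.
split => H.
  by have := MD _ _ (MN _ H) HK; rewrite addrA addNr add0r => /MN; rewrite opprK.
by have := MD _ _ H HK; rewrite addrC subrK.
Qed.

End Aux.
Arguments phi {R n}.
Arguments sc {R n}.
Arguments max_sc {R n}.
Arguments max_ker {R n}.

Theorem proposition2p25 (R : nzRingType) (n : nat) :
  NJ_symmetric R <-> NJ_symmetric (Rn_type R n).
Proof.
split => H.
- move=> A B C [k Hk] M HM.
  have [[M0 MD MN MM] M1 Mmax] := HM.
  pose I := fun r : R => M (sc r).
  have HI : maximal_left_ideal I.
    split.
    - split.
      + by rewrite /I sc0.
      + by move=> x y Ix Iy; rewrite /I scD; apply: MD.
      + by move=> x Ix; rewrite /I scN; apply: MN.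
      + by move=> r x Ix; rewrite /I scM; apply: MM.
    - by rewrite /I sc1.
    - move=> K [K0 KD KN KM] IK [x [Kx nIx]].
      pose K' := fun X : Rn_type R n => K (phi X).
      have : K' 1.
        apply: Mmax.
        + split.
          * by rewrite /K' phi0.
          * by move=> X Y; rewrite /K' phiD; apply: KD.
          * by move=> X; rewrite /K' phiN; apply: KN.
          * by move=> X Y; rewrite /K' phiM; apply: KM.
        + by move=> X /(max_sc _ HM) /IK.
        + by exists (sc x); rewrite /K' phi_sc.
      by rewrite /K' phi1.
  have := H (phi A) (phi B) (phi C).
  have Nabc : nilpotent_elt (phi A * phi B * phi C).
    by exists k; rewrite -!phiM -phiX Hk phi0.
  move=> /(_ Nabc I HI); rewrite /I -!phiM => HJ; exact: (proj2 (max_sc _ HM _) HJ).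
- move=> a b c [k Hk] I HI.
  have [[I0 ID IN IM] I1 Imax] := HI.
  pose M := fun X : Rn_type R n => I (phi X).
  have HM : maximal_left_ideal M.
    split.
    - split.
      + by rewrite /M phi0.
      + by move=> X Y; rewrite /M phiD; apply: ID.
      + by move=> X; rewrite /M phiN; apply: IN.
      + by move=> X Y; rewrite /M phiM; apply: IM.
    - by rewrite /M phi1.
    - move=> K [K0 KD KN KM] MK [X [KX nMX]].
      pose K' := fun r : R => K (sc r).
      have : K' 1.
        apply: Imax.
        + split.
          * by rewrite /K' sc0.
          * by move=> x y; rewrite /K' scD; apply: KD.
          * by move=> x; rewrite /K' scN; apply: KN.
          * by move=> x y; rewrite /K' scM; apply: KM.
        + by move=> r Ir; apply: MK; rewrite /M phi_sc.
        + exists (phi X); split => //.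
          have HK : K (X - sc (phi X)).
            by apply: MK; rewrite /M phiD phiN phi_sc subrr.
          have := KD _ _ KX (KN _ HK); rewrite opprB addrC subrK.
          by [].
      by rewrite /K' sc1.
  have := H (sc a) (sc b) (sc c).
  have Nabc : nilpotent_elt (@sc R n a * sc b * sc c).
    by exists k; rewrite -!scM -scX Hk sc0.
  by move=> /(_ Nabc M HM); rewrite /M -!scM phi_sc.
Qed.
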